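(* Let $n\ge1$, $\beta\ge2(n+2)$ and let $\Pi$ be a parameter set. Let $\mathcal{M}_\beta$ be the set of infinite matrices $A=(A_{ij})_{i,j\ge1}$ whose entries $A_{ij}=A_{ij}(\xi)$ are complex $2\times2$ matrices depending on $\xi\in\Pi$, such that $[A]_\beta<\infty$, where $[A]_\beta$ is the smallest constant with $$\sup_{\xi\in\Pi}\|A_{ij}(\xi)\|_{HS}\le\frac{[A]_\beta}{(1+\ln i)^\beta(1+\ln j)^\beta(1+|i-j|)}\quad\text{for all } i,j\ge1,$$ $\|\cdot\|_{HS}$ denoting the Hilbert–Schmidt norm. Then for $A,B\in\mathcal{M}_\beta$ the product $(A\cdot B)_{jl}=\sum_{k\ge1}A_{jk}B_{kl}$ satisfies $A\cdot B\in\mathcal{M}_\beta$ and $[A\cdot B]_\beta\le C[A]_\beta[B]_\beta$ for a constant $C$ independent of $A,B$. *)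

(* Defs.v *)
From Stdlib Require Import Reals Lra.
From Coquelicot Require Import Coquelicot.
Open Scope R_scope.

Inductive idx2 : Type := I1 | I2.

Definition mat2 : Type := idx2 -> idx2 -> C.

Definition hs_norm (M : mat2) : R :=
  sqrt (Cmod (M I1 I1) ^ 2 + Cmod (M I1 I2) ^ 2
        + Cmod (M I2 I1) ^ 2 + Cmod (M I2 I2) ^ 2).

Definition mat2_mul (M N : mat2) : mat2 :=
  fun a c => Cplus (Cmult (M a I1) (N I1 c)) (Cmult (M a I2) (N I2 c)).

(* Infinite matrices (A_ij)_{i,j >= 1} with entries depending on xi in Pi.
   Indices are natural numbers; only indices >= 1 are relevant. *)
Definition infmat (Pi : Type) : Type := Pi -> nat -> nat -> mat2.

Definition weight (beta : R) (i j : nat) : R :=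
  Rpower (1 + ln (INR i)) beta * Rpower (1 + ln (INR j)) beta
  * (1 + Rabs (INR i - INR j)).

Definition admissible {Pi : Type} (beta : R) (A : infmat Pi) (c : R) : Prop :=
  forall (xi : Pi) (i j : nat), (1 <= i)%nat -> (1 <= j)%nat ->
    hs_norm (A xi i j) <= c / weight beta i j.

Definition in_M {Pi : Type} (beta : R) (A : infmat Pi) : Prop :=
  exists c : R, admissible beta A c.

Definition brk {Pi : Type} (beta : R) (A : infmat Pi) : Rbar :=
  Glb_Rbar (fun c => admissible beta A c).

Definition infmat_mul {Pi : Type} (A B : infmat Pi) : infmat Pi :=
  fun xi j l a c =>
    (Series (fun k => fst (mat2_mul (A xi j (S k)) (B xi (S k) l) a c)),
     Series (fun k => snd (mat2_mul (A xi j (S k)) (B xi (S k) l) a c))).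

(* Main.v *)
Require Import Defs.
From Stdlib Require Import Reals Lra Lia Classical.
From Coquelicot Require Import Coquelicot.
Open Scope R_scope.

Definition L (k:nat) := 1 + ln (INR k).
Definition tt (j k : nat) := / (L k ^ 2 * (1 + Rabs (INR j - INR k))).
Definition term1 (k : nat) := / (INR k * L k ^ 2).
Definition U (m : nat) := match m with O => 2 | _ => / L m end.
Definition phi (j k : nat) :=
  if Nat.leb k j then ln (INR j - INR k + 1)
  else if Nat.leb k (2*j) then - ln (INR k - INR j + 1) else - ln (INR j + 1).

Lemma ln_le_sub1 x : 0 < x -> ln x <= x - 1.
Proof. intros H. generalize (exp_ineq1_le (ln x)). rewrite exp_ln; lra. Qed.

Lemma ln_succ_ge x : 0 < x -> / (x+1) <= ln (x+1) - ln x.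
Proof.
  intros H. assert (H1 : ln (x / (x+1)) <= x/(x+1) - 1).
  { apply ln_le_sub1. apply Rdiv_lt_0_compat; lra. }
  rewrite ln_div in H1 by lra.
  assert (x / (x+1) - 1 = - / (x+1)) by (field; lra). lra.
Qed.

Lemma ln2_le1 : ln 2 <= 1.
Proof. generalize (ln_le_sub1 2 ltac:(lra)). lra. Qed.

Lemma INR_ge1 k : (1 <= k)%nat -> 1 <= INR k.
Proof. intros. apply (le_INR 1 k) in H. simpl in H. lra. Qed.

Lemma ln_nat_ge0 k : (1 <= k)%nat -> 0 <= ln (INR k).
Proof. intros H. rewrite <- ln_1. apply ln_le; [lra|]. now apply INR_ge1. Qed.

Lemma L_ge1 k : (1 <= k)%nat -> 1 <= L k.
Proof. intros H. unfold L. generalize (ln_nat_ge0 k H). lra. Qed.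

Lemma U_nonneg m : 0 <= U m.
Proof.
  destruct m; simpl; [lra|]. left. apply Rinv_0_lt_compat.
  generalize (L_ge1 (S m) ltac:(lia)). lra.
Qed.

Lemma term1_tel m : term1 (S m) <= U m - U (S m).
Proof.
  destruct m.
  - unfold term1, U, L. simpl. rewrite ln_1. lra.
  - unfold term1. change (U (S m)) with (/ L (S m)). change (U (S (S m))) with (/ L (S (S m))).
    set (x := INR (S m)).
    assert (Hx : 1 <= x) by (apply INR_ge1; lia).
    assert (HS : INR (S (S m)) = x + 1) by (rewrite S_INR; reflexivity).
    unfold L. rewrite HS.
    set (p := 1 + ln x). set (q := 1 + ln (x+1)).
    assert (Hp : 1 <= p) by (unfold p; generalize (ln_nat_ge0 (S m) ltac:(lia)); fold x; lra).
    assert (Hd : / (x+1) <= q - p) by (unfold q, p; generalize (ln_succ_ge x ltac:(lra)); lra).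
    assert (Hq : p <= q) by (generalize (Rinv_0_lt_compat (x+1) ltac:(lra)); lra).
    assert (E : / p - / q = (q - p) / (p * q)) by (field; lra).
    fold x p. rewrite E.
    apply Rle_trans with ((q-p) / (q*q)).
    + unfold Rdiv. replace (/ ((x+1) * q ^ 2)) with (/ (x+1) * / (q*q)).
      2:{ field. lra. }
      apply Rmult_le_compat_r; [|exact Hd].
      left. apply Rinv_0_lt_compat. nra.
    + unfold Rdiv. apply Rmult_le_compat_l; [lra|].
      apply Rinv_le_contravar; nra.
Qed.
Lemma phi_tel j k : (1 <= j)%nat ->
  0 <= phi j k - phi j (S k) /\
  ((k < 2*j)%nat -> / (1 + Rabs (INR j - INR k)) <= 2 * (phi j k - phi j (S k))).
Proof.
  intros Hj. unfold phi. rewrite S_INR.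
  assert (HJ := INR_ge1 j Hj).
  destruct (Nat.lt_total k j) as [H|[H|H]].
  - rewrite (proj2 (Nat.leb_le k j)) by lia.
    rewrite (proj2 (Nat.leb_le (S k) j)) by lia.
    assert (HK : INR k + 1 <= INR j) by (rewrite <- S_INR; apply le_INR; lia).
    set (x := INR j - (INR k + 1) + 1).
    replace (INR j - INR k + 1) with (x + 1) by (unfold x; ring).
    assert (Hx : 1 <= x) by (unfold x; lra).
    generalize (ln_succ_ge x ltac:(lra)). intros Hl.
    assert (0 < / (x+1)) by (apply Rinv_0_lt_compat; lra).
    split; [lra|]. intros _.
    replace (1 + Rabs (INR j - INR k)) with (x + 1).
    2:{ rewrite Rabs_right by lra. unfold x; ring. }
    lra.
  - subst k. rewrite Nat.leb_refl.
    rewrite (proj2 (Nat.leb_gt (S j) j)) by lia.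
    rewrite (proj2 (Nat.leb_le (S j) (2*j))) by lia.
    replace (INR j - INR j + 1) with 1 by ring.
    replace (INR j + 1 - INR j + 1) with (1 + 1) by ring.
    rewrite ln_1. generalize (ln_succ_ge 1 ltac:(lra)). rewrite ln_1. intros Hl.
    replace (/ (1+1)) with (/2) in Hl by (field).
    split; [lra|]. intros _. replace (INR j - INR j) with 0 by ring. rewrite Rabs_R0.
    replace (/ (1+0)) with 1 by field. lra.
  - rewrite (proj2 (Nat.leb_gt k j)) by lia.
    rewrite (proj2 (Nat.leb_gt (S k) j)) by lia.
    assert (HK : INR j + 1 <= INR k) by (rewrite <- S_INR; apply le_INR; lia).
    destruct (Nat.le_gt_cases (S k) (2*j)) as [H2|H2].
    + rewrite (proj2 (Nat.leb_le k (2*j))) by lia.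
      rewrite (proj2 (Nat.leb_le (S k) (2*j))) by lia.
      set (x := INR k - INR j + 1).
      replace (INR k + 1 - INR j + 1) with (x + 1) by (unfold x; ring).
      assert (Hx : 2 <= x) by (unfold x; lra).
      generalize (ln_succ_ge x ltac:(lra)). intros Hl.
      assert (0 < / (x+1)) by (apply Rinv_0_lt_compat; lra).
      split; [lra|]. intros _.
      replace (1 + Rabs (INR j - INR k)) with x.
      2:{ rewrite Rabs_left by lra. unfold x; ring. }
      assert (/ x <= 2 * / (x+1)).
      { replace (2 * / (x+1)) with (/ ((x+1)/2)) by (field; lra).
        apply Rinv_le_contravar; lra. }
      lra.
    + destruct (Nat.eq_dec k (2*j)) as [E|E].
      * subst k. rewrite Nat.leb_refl.
        rewrite (proj2 (Nat.leb_gt (S (2*j)) (2*j))) by lia.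
        rewrite mult_INR. simpl (INR 2).
        replace ((1+1) * INR j - INR j + 1) with (INR j + 1) by ring.
        split; [lra|]. intros; lia.
      * rewrite (proj2 (Nat.leb_gt k (2*j))) by lia.
        rewrite (proj2 (Nat.leb_gt (S k) (2*j))) by lia.
        split; [lra|]. intros; lia.
Qed.

Lemma phi_bound j k : (1 <= j)%nat -> phi j 1 - phi j k <= 2 * L j.
Proof.
  intros Hj. assert (HJ := INR_ge1 j Hj). unfold phi, L.
  rewrite (proj2 (Nat.leb_le 1 j)) by lia. simpl (INR 1).
  replace (INR j - 1 + 1) with (INR j) by ring.
  assert (H0 := ln_nat_ge0 j Hj).
  assert (Hj1 : ln (INR j + 1) <= 1 + ln (INR j)).
  { apply Rle_trans with (ln (2 * INR j)).
    - apply ln_le; lra.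
    - rewrite ln_mult by lra. generalize ln2_le1. lra. }
  destruct (Nat.leb k j) eqn:E1.
  - apply Nat.leb_le in E1.
    assert (0 <= ln (INR j - INR k + 1)).
    { rewrite <- ln_1. apply ln_le; [lra|].
      assert (INR k <= INR j) by (apply le_INR; lia). lra. }
    lra.
  - apply Nat.leb_gt in E1.
    destruct (Nat.leb k (2*j)) eqn:E2.
    + apply Nat.leb_le in E2.
      assert (ln (INR k - INR j + 1) <= ln (INR j + 1)).
      { apply ln_le.
        - assert (INR j < INR k) by (apply lt_INR; lia). lra.
        - assert (INR k <= INR (2*j)) by (apply le_INR; lia).
          rewrite mult_INR in H. simpl in H. lra. }
      lra.
    + lra.
Qed.

Lemma tt_split j m : (1 <= j)%nat ->
  tt j (S m) <= 2 * (U m - U (S m)) + 8 / (L j ^ 2) * (phi j (S m) - phi j (S (S m))).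
Proof.
  intros Hj. assert (HJ := INR_ge1 j Hj).
  assert (HK := INR_ge1 (S m) ltac:(lia)).
  assert (T1 := term1_tel m).
  assert (HLk := L_ge1 (S m) ltac:(lia)). assert (HLj := L_ge1 j Hj).
  assert (Tpos : 0 < term1 (S m)).
  { unfold term1. apply Rinv_0_lt_compat. apply Rmult_lt_0_compat; [lra|]. apply pow_lt; lra. }
  destruct (phi_tel j (S m) Hj) as [D0 D1].
  assert (Hc : 0 <= 8 / L j ^ 2).
  { unfold Rdiv. apply Rmult_le_pos; [lra|]. left. apply Rinv_0_lt_compat, pow_lt; lra. }
  assert (Hcd : 0 <= 8 / L j ^ 2 * (phi j (S m) - phi j (S (S m)))) by (apply Rmult_le_pos; lra).
  unfold tt. set (K := INR (S m)) in *. set (J := INR j) in *.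
  set (Lk := L (S m)) in *. set (Lj := L j) in *.
  assert (Hapos : 0 < 1 + Rabs (J - K)) by (generalize (Rabs_pos (J-K)); lra).
  destruct (Nat.le_gt_cases (2*j) (S m)) as [C1|C1].
  - assert (H2 : 2 * J <= K).
    { unfold J, K. replace 2 with (INR 2) by (simpl; lra). rewrite <- mult_INR. apply le_INR; lia. }
    assert (Ha : K / 2 <= 1 + Rabs (J - K)) by (rewrite Rabs_left1; lra).
    apply Rle_trans with (/ (Lk ^ 2 * (K/2))).
    { apply Rinv_le_contravar.
      - apply Rmult_lt_0_compat; [apply pow_lt; lra| lra].
      - apply Rmult_le_compat_l; [apply pow_le; lra| lra]. }
    replace (/ (Lk ^ 2 * (K/2))) with (2 * term1 (S m)).
    2:{ unfold term1. fold K Lk. field. split; lra. }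
    lra.
  - destruct (Nat.le_gt_cases (2*(S m)) j) as [C2|C2].
    + assert (H2 : 2 * K <= J).
      { unfold J, K. replace 2 with (INR 2) by (simpl; lra). rewrite <- mult_INR. apply le_INR; lia. }
      assert (Ha : K <= 1 + Rabs (J - K)) by (rewrite Rabs_right; lra).
      apply Rle_trans with (/ (Lk ^ 2 * K)).
      { apply Rinv_le_contravar.
        - apply Rmult_lt_0_compat; [apply pow_lt; lra| lra].
        - apply Rmult_le_compat_l; [apply pow_le; lra| lra]. }
      replace (/ (Lk ^ 2 * K)) with (term1 (S m)).
      2:{ unfold term1. fold K Lk. field. split; lra. }
      lra.
    + assert (H2 : J <= 2 * K).
      { unfold J, K. replace 2 with (INR 2) by (simpl; lra). rewrite <- mult_INR. apply le_INR; lia. }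
      assert (HL : Lj <= 2 * Lk).
      { unfold Lj, Lk, L. fold J K.
        assert (ln J <= 1 + ln K).
        { apply Rle_trans with (ln (2 * K)). apply ln_le; lra.
          rewrite ln_mult by lra. generalize ln2_le1; lra. }
        assert (0 <= ln K) by (apply ln_nat_ge0; lia). lra. }
      specialize (D1 ltac:(lia)). fold J K in D1.
      apply Rle_trans with (/ ((Lj/2) ^ 2 * (1 + Rabs (J - K)))).
      { apply Rinv_le_contravar.
        - apply Rmult_lt_0_compat; [apply pow_lt; lra| lra].
        - apply Rmult_le_compat_r; [lra|]. apply pow_incr; lra. }
      replace (/ ((Lj/2) ^ 2 * (1 + Rabs (J - K)))) with (4 / Lj ^ 2 * / (1 + Rabs (J - K))).
      2:{ field. split; lra. }
      assert (0 <= U m - U (S m)) by lra.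
      apply Rle_trans with (4 / Lj ^ 2 * (2 * (phi j (S m) - phi j (S (S m))))).
      { apply Rmult_le_compat_l; [|exact D1].
        unfold Rdiv. apply Rmult_le_pos; [lra|]. left. apply Rinv_0_lt_compat, pow_lt; lra. }
      replace (4 / Lj ^ 2 * (2 * (phi j (S m) - phi j (S (S m)))))
        with (8 / Lj ^ 2 * (phi j (S m) - phi j (S (S m)))) by (field; lra).
      lra.
Qed.

Lemma telescope (a u : nat -> R) N : (forall m, a m <= u m - u (S m)) ->
  sum_n a N <= u 0%nat - u (S N).
Proof.
  intros H. induction N.
  - rewrite sum_O. apply H.
  - rewrite sum_Sn. specialize (H (S N)). change (plus (sum_n a N) (a (S N))) with (sum_n a N + a (S N)). lra.
Qed.

Lemma G_bound j N : (1 <= j)%nat -> sum_n (fun m => tt j (S m)) N <= 20.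
Proof.
  intros Hj.
  eapply Rle_trans.
  { apply (telescope _ (fun m => 2 * U m + 8 / L j ^ 2 * phi j (S m))).
    intros m. generalize (tt_split j m Hj). lra. }
  cbv beta. change (U 0%nat) with 2.
  assert (HLj := L_ge1 j Hj).
  assert (Hb := phi_bound j (S (S N)) Hj).
  assert (HU := U_nonneg (S N)).
  assert (E : 8 / L j ^ 2 * phi j 1 - 8 / L j ^ 2 * phi j (S (S N))
              = 8 / L j ^ 2 * (phi j 1 - phi j (S (S N)))) by ring.
  assert (8 / L j ^ 2 * (phi j 1 - phi j (S (S N))) <= 8 / L j ^ 2 * (2 * L j)).
  { apply Rmult_le_compat_l; [|exact Hb]. unfold Rdiv. apply Rmult_le_pos; [lra|].
    left. apply Rinv_0_lt_compat, pow_lt; lra. }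
  assert (8 / L j ^ 2 * (2 * L j) = 16 / L j) by (field; lra).
  assert (16 / L j <= 16).
  { unfold Rdiv. rewrite <- (Rmult_1_r 16) at 2. apply Rmult_le_compat_l; [lra|].
    rewrite <- Rinv_1. apply Rinv_le_contravar; lra. }
  lra.
Qed.

Lemma gen_ineq pj pl pk q a b c : 0 < pj -> 0 < pl -> 0 < q -> 0 < a -> 0 < b -> 0 < c ->
  q <= pk * pk -> c <= a + b ->
  / (pj * pk * a * (pk * pl * b)) <= / (pj * pl * c) * (/ (q * a) + / (q * b)).
Proof.
  intros Hj Hl Hq Ha Hb Hc Hk Hab.
  assert (Hpk : 0 < pk * pk) by lra.
  assert (pk <> 0) by (intro E; subst; lra).
  replace (/ (pj * pk * a * (pk * pl * b))) with (/ (pj*pl*a*b) * / (pk*pk)) by (field; repeat split; lra).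
  replace (/ (pj * pl * c) * (/ (q * a) + / (q * b))) with (/ (pj*pl*a*b) * ((a+b)/c * / q)) by (field; repeat split; lra).
  apply Rmult_le_compat_l.
  { left. apply Rinv_0_lt_compat. repeat apply Rmult_lt_0_compat; lra. }
  apply Rle_trans with (/ q). { apply Rinv_le_contravar; lra. }
  rewrite <- (Rmult_1_l (/ q)) at 1. apply Rmult_le_compat_r.
  { left; apply Rinv_0_lt_compat; lra. }
  replace 1 with (c / c) by (field; lra). unfold Rdiv. apply Rmult_le_compat_r; [left; apply Rinv_0_lt_compat; lra| lra].
Qed.

Lemma Rpower_ge beta x : 1 <= beta -> 1 <= x -> x <= Rpower x beta.
Proof.
  intros Hb Hx. rewrite <- (Rpower_1 x) at 1 by lra. apply Rle_Rpower; lra.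
Qed.

Lemma Rpower_pos x y : 0 < Rpower x y.
Proof. unfold Rpower. apply exp_pos. Qed.

Lemma weight_pos beta i j : 0 < weight beta i j.
Proof.
  unfold weight. apply Rmult_lt_0_compat; [apply Rmult_lt_0_compat; apply Rpower_pos|].
  generalize (Rabs_pos (INR i - INR j)); lra.
Qed.

Lemma w_prod beta j l k : 1 <= beta -> (1 <= j)%nat -> (1 <= l)%nat -> (1 <= k)%nat ->
  / (weight beta j k * weight beta k l) <= / weight beta j l * (tt j k + tt l k).
Proof.
  intros Hb Hj Hl Hk. unfold weight, tt.
  assert (HLk := L_ge1 k Hk). unfold L in HLk.
  assert (HP := Rpower_ge beta _ Hb HLk).
  rewrite (Rabs_minus_sym (INR l) (INR k)).
  replace (Rpower (1 + ln (INR j)) beta * Rpower (1 + ln (INR k)) beta * (1 + Rabs (INR j - INR k)) *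
    (Rpower (1 + ln (INR k)) beta * Rpower (1 + ln (INR l)) beta * (1 + Rabs (INR k - INR l))))
   with (Rpower (1 + ln (INR j)) beta * Rpower (1 + ln (INR k)) beta * (1 + Rabs (INR j - INR k)) *
    (Rpower (1 + ln (INR k)) beta * Rpower (1 + ln (INR l)) beta * (1 + Rabs (INR k - INR l)))) by reflexivity.
  apply gen_ineq; try apply Rpower_pos.
  - unfold L. apply pow_lt. lra.
  - generalize (Rabs_pos (INR j - INR k)); lra.
  - generalize (Rabs_pos (INR k - INR l)); lra.
  - generalize (Rabs_pos (INR j - INR l)); lra.
  - unfold L. simpl. rewrite Rmult_1_r. apply Rmult_le_compat; lra.
  - replace (INR j - INR l) with ((INR j - INR k) + (INR k - INR l)) by ring.
    generalize (Rabs_triang (INR j - INR k) (INR k - INR l)). lra.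
Qed.

Lemma Cmod_le_hs (M : mat2) a b : Cmod (M a b) <= hs_norm M.
Proof.
  unfold hs_norm. rewrite <- (sqrt_pow2 (Cmod (M a b))) by apply Cmod_ge_0.
  apply sqrt_le_1_alt.
  generalize (pow2_ge_0 (Cmod (M I1 I1))) (pow2_ge_0 (Cmod (M I1 I2)))
    (pow2_ge_0 (Cmod (M I2 I1))) (pow2_ge_0 (Cmod (M I2 I2))).
  destruct a, b; lra.
Qed.

Lemma hs_le (M : mat2) e : (forall a b, Cmod (M a b) <= e) -> hs_norm M <= 2 * e.
Proof.
  intros H. assert (He : 0 <= e) by (generalize (H I1 I1) (Cmod_ge_0 (M I1 I1)); lra).
  unfold hs_norm. rewrite <- (sqrt_square (2*e)) by lra.
  apply sqrt_le_1_alt.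
  assert (Hs : forall a b, Cmod (M a b) ^ 2 <= e * e).
  { intros a b. simpl. rewrite Rmult_1_r. apply Rmult_le_compat; try apply Cmod_ge_0; apply H. }
  generalize (Hs I1 I1) (Hs I1 I2) (Hs I2 I1) (Hs I2 I2). lra.
Qed.

Lemma mul_entry (M N : mat2) a c : Cmod (mat2_mul M N a c) <= 2 * (hs_norm M * hs_norm N).
Proof.
  unfold mat2_mul. eapply Rle_trans; [apply Cmod_triangle|].
  rewrite !Cmod_mult.
  assert (forall x y, Cmod (M a x) * Cmod (N y c) <= hs_norm M * hs_norm N).
  { intros. apply Rmult_le_compat; try apply Cmod_ge_0; apply Cmod_le_hs. }
  generalize (H I1 I1) (H I2 I2). lra.
Qed.

Lemma sum_n_lin (D : R) (f g : nat -> R) N :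
  sum_n (fun m => D * (f m + g m)) N = D * (sum_n f N + sum_n g N).
Proof.
  induction N.
  - rewrite !sum_O. reflexivity.
  - rewrite !sum_Sn, IHN. unfold plus; simpl. ring.
Qed.

Lemma sum_n_nonneg_mono (f : nat -> R) N : (forall m, 0 <= f m) -> sum_n f N <= sum_n f (S N).
Proof. intros H. rewrite sum_Sn. change (plus ?x ?y) with (x + y). generalize (H (S N)). lra. Qed.

Lemma series_bounded (f : nat -> R) M : (forall m, 0 <= f m) -> (forall N, sum_n f N <= M) ->
  ex_series f /\ Series f <= M.
Proof.
  intros H0 HM.
  destruct (ex_finite_lim_seq_incr (sum_n f) M (fun n => sum_n_nonneg_mono f n H0) HM) as [l Hl].
  assert (Hs : is_series f l) by exact Hl.
  split; [exists l; exact Hs|].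
  rewrite (is_series_unique f l Hs).
  assert (Rbar_le l M).
  { apply (is_lim_seq_le (sum_n f) (fun _ => M) l M HM Hl). apply is_lim_seq_const. }
  exact H.
Qed.

Lemma is_series_C (z : nat -> C) x y :
  is_series (fun k => fst (z k)) x -> is_series (fun k => snd (z k)) y -> is_series z (x, y).
Proof.
  intros Hx Hy. unfold is_series in *.
  assert (Hsum : forall N, sum_n z N = (sum_n (fun k => fst (z k)) N, sum_n (fun k => snd (z k)) N)).
  { induction N.
    - rewrite !sum_O. destruct (z 0%nat); reflexivity.
    - rewrite !sum_Sn, IHN. reflexivity. }
  apply filterlim_locally. intros eps.
  assert (Hx' := proj1 (filterlim_locally _ _) Hx eps).
  assert (Hy' := proj1 (filterlim_locally _ _) Hy eps).
  generalize (filter_and _ _ Hx' Hy'). apply filter_imp. intros N [H1 H2].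
  rewrite Hsum. split; assumption.
Qed.

Lemma adm_nonneg beta (Pi : Type) (A : infmat Pi) a (xi : Pi) : admissible beta A a -> 0 <= a.
Proof.
  intros H. specialize (H xi 1%nat 1%nat ltac:(lia) ltac:(lia)).
  assert (Hw := weight_pos beta 1 1).
  assert (0 <= hs_norm (A xi 1%nat 1%nat)) by apply sqrt_pos.
  assert (0 <= a / weight beta 1 1) by lra.
  replace a with (a / weight beta 1 1 * weight beta 1 1) by (field; lra).
  apply Rmult_le_pos; lra.
Qed.

Lemma sqrt2_le2 : sqrt 2 <= 2.
Proof. apply Rle_trans with (sqrt (2*2)); [apply sqrt_le_1_alt; lra | rewrite sqrt_square; lra]. Qed.

Lemma main_lemma beta (Pi : Type) (A B : infmat Pi) a b : 1 <= beta ->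
  admissible beta A a -> admissible beta B b ->
  forall xi j l ac cc, (1 <= j)%nat -> (1 <= l)%nat ->
     is_series (fun k => mat2_mul (A xi j (S k)) (B xi (S k) l) ac cc) (infmat_mul A B xi j l ac cc)
     /\ Cmod (infmat_mul A B xi j l ac cc) <= 160 * (a * b / weight beta j l).
Proof.
  intros Hb HA HB xi j l ac cc Hj Hl.
  assert (Ha0 := adm_nonneg beta Pi A a xi HA).
  assert (Hb0 := adm_nonneg beta Pi B b xi HB).
  assert (Hw := weight_pos beta j l).
  set (w := weight beta j l) in *.
  set (D := 2 * (a * b / w)).
  assert (HD : 0 <= D).
  { unfold D. unfold Rdiv. apply Rmult_le_pos; [lra|]. apply Rmult_le_pos; [nra|].
    left; apply Rinv_0_lt_compat; lra. }
  set (z := fun k => mat2_mul (A xi j (S k)) (B xi (S k) l) ac cc).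
  set (bnd := fun m => D * (tt j (S m) + tt l (S m))).
  assert (tt_pos : forall i k, (1 <= k)%nat -> 0 <= tt i k).
  { intros i k Hk. unfold tt. left. apply Rinv_0_lt_compat. apply Rmult_lt_0_compat.
    - apply pow_lt. generalize (L_ge1 k Hk). lra.
    - generalize (Rabs_pos (INR i - INR k)). lra. }
  assert (Hbnd0 : forall m, 0 <= bnd m).
  { intros m. unfold bnd. apply Rmult_le_pos; [lra|].
    generalize (tt_pos j (S m) ltac:(lia)) (tt_pos l (S m) ltac:(lia)). lra. }
  assert (Hz : forall m, Cmod (z m) <= bnd m).
  { intros m. unfold z. eapply Rle_trans; [apply mul_entry|].
    assert (H1 := HA xi j (S m) Hj ltac:(lia)).
    assert (H2 := HB xi (S m) l ltac:(lia) Hl).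
    assert (W1 := weight_pos beta j (S m)). assert (W2 := weight_pos beta (S m) l).
    apply Rle_trans with (2 * (a / weight beta j (S m) * (b / weight beta (S m) l))).
    { apply Rmult_le_compat_l; [lra|]. apply Rmult_le_compat; try apply sqrt_pos; assumption. }
    replace (2 * (a / weight beta j (S m) * (b / weight beta (S m) l)))
      with (2 * (a * b) * / (weight beta j (S m) * weight beta (S m) l)) by (field; lra).
    unfold bnd, D.
    replace (2 * (a * b / w) * (tt j (S m) + tt l (S m)))
      with (2 * (a * b) * (/ w * (tt j (S m) + tt l (S m)))) by (field; lra).
    apply Rmult_le_compat_l; [nra|].
    apply w_prod; lia || lra. }
  assert (Hsum : forall N, sum_n bnd N <= 40 * D).
  { intros N. unfold bnd. rewrite sum_n_lin.
    generalize (G_bound j N Hj) (G_bound l N Hl). intros.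
    replace (40 * D) with (D * (20 + 20)) by ring.
    apply Rmult_le_compat_l; lra. }
  destruct (series_bounded bnd (40 * D) Hbnd0 Hsum) as [Hex HS].
  set (f1 := fun k => fst (z k)). set (f2 := fun k => snd (z k)).
  assert (Hf1 : forall m, Rabs (f1 m) <= bnd m).
  { intros m. eapply Rle_trans; [apply re_le_Cmod|apply Hz]. }
  assert (Hf2 : forall m, Rabs (f2 m) <= bnd m).
  { intros m. eapply Rle_trans; [|apply Hz]. eapply Rle_trans; [|apply Rmax_Cmod]. apply Rmax_r. }
  assert (E1 : ex_series f1) by (apply (ex_series_le f1 bnd); [exact Hf1| exact Hex]).
  assert (E2 : ex_series f2) by (apply (ex_series_le f2 bnd); [exact Hf2| exact Hex]).
  assert (EA1 : ex_series (fun m => Rabs (f1 m))).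
  { apply (ex_series_le (fun m => Rabs (f1 m)) bnd); [|exact Hex]. intros m. change (Rabs (Rabs (f1 m)) <= bnd m).
    rewrite Rabs_Rabsolu. apply Hf1. }
  assert (EA2 : ex_series (fun m => Rabs (f2 m))).
  { apply (ex_series_le (fun m => Rabs (f2 m)) bnd); [|exact Hex]. intros m. change (Rabs (Rabs (f2 m)) <= bnd m).
    rewrite Rabs_Rabsolu. apply Hf2. }
  assert (B1 : Rabs (Series f1) <= 40 * D).
  { eapply Rle_trans; [apply Series_Rabs, EA1|]. eapply Rle_trans; [|exact HS].
    apply Series_le; [|exact Hex]. intros m. split; [apply Rabs_pos| apply Hf1]. }
  assert (B2 : Rabs (Series f2) <= 40 * D).
  { eapply Rle_trans; [apply Series_Rabs, EA2|]. eapply Rle_trans; [|exact HS].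
    apply Series_le; [|exact Hex]. intros m. split; [apply Rabs_pos| apply Hf2]. }
  assert (Eq : infmat_mul A B xi j l ac cc = (Series f1, Series f2)) by reflexivity.
  rewrite Eq. split.
  - apply is_series_C; apply Series_correct; assumption.
  - eapply Rle_trans; [apply Cmod_2Rmax|]. simpl fst; simpl snd.
    assert (Rmax (Rabs (Series f1)) (Rabs (Series f2)) <= 40 * D) by (apply Rmax_lub; assumption).
    assert (0 <= Rmax (Rabs (Series f1)) (Rabs (Series f2))).
    { eapply Rle_trans; [apply Rabs_pos| apply Rmax_l]. }
    apply Rle_trans with (2 * (40 * D)).
    + apply Rmult_le_compat; try lra. apply sqrt_pos. apply sqrt2_le2.
    + unfold D. lra.
Qed.

Lemma brk_finite beta (Pi : Type) (A : infmat Pi) a (xi0 : Pi) : admissible beta A a ->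
  exists a0, brk beta A = Finite a0 /\ admissible beta A a0.
Proof.
  intros HA. unfold brk.
  destruct (Glb_Rbar_correct (fun c => admissible beta A c)) as [Hlb Hgl].
  assert (H0 : Rbar_le (Finite 0) (Glb_Rbar (fun c => admissible beta A c))).
  { apply Hgl. intros c Hc. simpl. exact (adm_nonneg beta Pi A c xi0 Hc). }
  assert (H1 := Hlb a HA).
  destruct (Glb_Rbar (fun c => admissible beta A c)) as [r| |] eqn:E; simpl in H0, H1; try contradiction.
  exists r. split; [reflexivity|].
  intros xi i j Hi Hj. assert (Hw := weight_pos beta i j).
  assert (Hr : Rbar_le (Finite (hs_norm (A xi i j) * weight beta i j)) (Finite r)).
  { apply Hgl. intros c Hc. simpl. specialize (Hc xi i j Hi Hj).
    apply Rmult_le_compat_r with (r := weight beta i j) in Hc; [|lra].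
    replace (c / weight beta i j * weight beta i j) with c in Hc by (field; lra). exact Hc. }
  simpl in Hr.
  apply Rmult_le_reg_r with (weight beta i j); [lra|].
  replace (r / weight beta i j * weight beta i j) with r by (field; lra). exact Hr.
Qed.

Lemma brk_empty beta (Pi : Type) (A : infmat Pi) : ~ (exists xi : Pi, True) -> brk beta A = m_infty.
Proof.
  intros Hne. unfold brk.
  destruct (Glb_Rbar_correct (fun c => admissible beta A c)) as [Hlb Hgl].
  assert (Hall : forall c, admissible beta A c).
  { intros c xi. exfalso. apply Hne. exists xi. exact I. }
  destruct (Glb_Rbar (fun c => admissible beta A c)) as [r| |] eqn:E.
  - specialize (Hlb (r - 1) (Hall _)). simpl in Hlb. lra.
  - specialize (Hlb 0 (Hall _)). simpl in Hlb. contradiction.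
  - reflexivity.
Qed.

Theorem lemma5p5 (n : nat) (beta : R) (Pi : Type) :
  (1 <= n)%nat -> 2 * (INR n + 2) <= beta ->
  exists C : R,
    forall A B : infmat Pi, in_M beta A -> in_M beta B ->
      (* the series defining the product converge, entrywise in C *)
      (forall (xi : Pi) (j l : nat) (a c : idx2),
         (1 <= j)%nat -> (1 <= l)%nat ->
         is_series (fun k => mat2_mul (A xi j (S k)) (B xi (S k) l) a c)
                   (infmat_mul A B xi j l a c)) /\
      in_M beta (infmat_mul A B) /\
      Rbar_le (brk beta (infmat_mul A B))
              (Rbar_mult (Rbar_mult C (brk beta A)) (brk beta B)).
Proof.
  intros Hn Hbeta.
  assert (Hb : 1 <= beta) by (generalize (pos_INR n); lra).
  exists 320. intros A B [a HA] [b HB].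
  assert (Adm : forall a b, admissible beta A a -> admissible beta B b ->
            admissible beta (infmat_mul A B) (320 * a * b)).
  { intros a' b' HA' HB' xi i j Hi Hj.
    assert (Hw := weight_pos beta i j).
    eapply Rle_trans.
    { apply hs_le. intros ac cc. apply (proj2 (main_lemma beta Pi A B a' b' Hb HA' HB' xi i j ac cc Hi Hj)). }
    replace (2 * (160 * (a' * b' / weight beta i j))) with (320 * a' * b' / weight beta i j) by (field; lra).
    lra. }
  split; [|split].
  - intros xi j l ac cc Hj Hl. apply (proj1 (main_lemma beta Pi A B a b Hb HA HB xi j l ac cc Hj Hl)).
  - exists (320 * a * b). apply Adm; assumption.
  - destruct (classic (exists xi : Pi, True)) as [[xi0 _]|Hne].
    + destruct (brk_finite beta Pi A a xi0 HA) as [a0 [Ea HA0]].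
      destruct (brk_finite beta Pi B b xi0 HB) as [b0 [Eb HB0]].
      rewrite Ea, Eb. simpl.
      unfold brk. destruct (Glb_Rbar_correct (fun c => admissible beta (infmat_mul A B) c)) as [Hlb _].
      apply Hlb. apply Adm; assumption.
    + rewrite (brk_empty beta Pi (infmat_mul A B) Hne). simpl. exact I.
Qed.
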